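(* Let $H$ be a hypergraph on $V=[n]$ and let $A,B$ be hyperedges of $H$. Then $A$ and $B$ are $r$-orthogonal if and only if $\mathrm{cl}_r(\{A,B\})=\mathrm{cl}_r(\{A\})\cup\mathrm{cl}_r(\{B\})$.
   Context: Hypergraphs on $V$ are identified with their hyperedge sets; $\{A\}$, $\{A,B\}$ denote hypergraphs on $V$ with the indicated hyperedges. $\mathcal K_r(n)$ is the class of hypergraphs $\mathcal E$ on $V$ satisfying: (R0) every $X\subseteq V$ with $|X|\le r$ is in $\mathcal E$; (R1) $A\in\mathcal E\Rightarrow V\setminus A\in\mathcal E$; (R2) $A,B\in\mathcal E$ and $|A\cap B|\ge r\Rightarrow A\cup B\in\mathcal E$. $\mathcal K^0_r(n)$ is the class satisfying (R0) and (R1) only. $\mathrm{cl}_r(H)$ (resp. $\mathrm{cl}^0_r(H)$) is the intersection of all hypergraphs in $\mathcal K_r(n)$ (resp. $\mathcal K^0_r(n)$) containing $H$. $A,B$ are $r$-orthogonal if $\mathrm{cl}_r(\{A,B\})=\mathrm{cl}^0_r(\{A,B\})$. *)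

(* Defs.v *)
(* V = [n] is modelled as 'I_n; a hypergraph on V is its
   hyperedge set, a {set {set 'I_n}}. The axioms are boolean (finite
   quantifiers), which is what lets cl_r be a finite set. *)
From mathcomp Require Import all_boot.
Set Implicit Arguments. Unset Strict Implicit. Unset Printing Implicit Defensive.

Section Hyp.
Variable n : nat.
Local Notation V := ('I_n).
Local Notation hypergraph := {set {set V}}.

Definition R0 (r : nat) (E : hypergraph) : bool :=
  [forall X : {set V}, (#|X| <= r) ==> (X \in E)].
Definition R1 (E : hypergraph) : bool :=
  [forall A : {set V}, (A \in E) ==> (~: A \in E)].
Definition R2 (r : nat) (E : hypergraph) : bool :=
  [forall A : {set V}, forall B : {set V},
     [&& A \in E, B \in E & r <= #|A :&: B|] ==> (A :|: B \in E)].

Definition in_K (r : nat) (E : hypergraph) : bool := [&& R0 r E, R1 E & R2 r E].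
Definition in_K0 (r : nat) (E : hypergraph) : bool := R0 r E && R1 E.

Definition cl (r : nat) (H : hypergraph) : hypergraph :=
  \bigcap_(E : hypergraph | in_K r E && (H \subset E)) E.
Definition cl0 (r : nat) (H : hypergraph) : hypergraph :=
  \bigcap_(E : hypergraph | in_K0 r E && (H \subset E)) E.

Definition r_orthogonal (r : nat) (A B : {set V}) : Prop :=
  cl r [set A; B] = cl0 r [set A; B].
End Hyp.

(* Main.v *)
Require Import Defs.
From mathcomp Require Import all_boot.
Set Implicit Arguments. Unset Strict Implicit. Unset Printing Implicit Defensive.

Section S.
Variables (n r : nat).
Local Notation V := ('I_n).

Definition E1 (A : {set V}) : {set {set V}} :=
  [set X : {set V} | [|| #|X| <= r, #|~: X| <= r, X == A | X == ~: A]].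

Lemma clP (H : {set {set V}}) X :
  reflect (forall E, in_K r E -> H \subset E -> X \in E) (X \in cl r H).
Proof.
apply: (iffP bigcapP) => h E.
- by move=> k s; apply: h; rewrite k s.
- by case/andP=> k s; apply: h.
Qed.

Lemma cl0P (H : {set {set V}}) X :
  reflect (forall E, in_K0 r E -> H \subset E -> X \in E) (X \in cl0 r H).
Proof.
apply: (iffP bigcapP) => h E.
- by move=> k s; apply: h; rewrite k s.
- by case/andP=> k s; apply: h.
Qed.

Lemma small_sub (X Y : {set V}) : #|X| <= r -> r <= #|X :&: Y| -> X \subset Y.
Proof.
move=> hX hI; apply/setIidPl; apply/eqP; rewrite eqEcard subsetIl /=.
exact: leq_trans hX hI.
Qed.

Lemma cosmall_U (X Y : {set V}) : #|~: Y| <= r -> #|~: (X :|: Y)| <= r.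
Proof.
move=> h; apply: leq_trans h; apply: subset_leq_card.
by rewrite setCU subsetIr.
Qed.

Lemma E1_K A : in_K r (E1 A).
Proof.
apply/and3P; split.
- by apply/forallP => X; apply/implyP => h; rewrite inE h.
- apply/forallP => X; apply/implyP; rewrite !inE setCK.
  by case/or4P=> [->|->|/eqP->|/eqP->]; rewrite ?setCK ?eqxx ?orbT.
- apply/forallP => X; apply/forallP => Y; apply/implyP.
  case/and3P; rewrite !inE => hX hY hI.
  have hI' : r <= #|Y :&: X| by rewrite setIC.
  case/or4P: hX => hX.
  + by move/setUidPr: (small_sub hX hI) => ->; rewrite hY.
  + by rewrite setUC (cosmall_U _ hX) orbT.
  + case/or4P: hY => hY.
    * by move/setUidPl: (small_sub hY hI') => ->; rewrite (eqP hX) eqxx !orbT.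
    * by rewrite (cosmall_U _ hY) orbT.
    * by rewrite (eqP hX) (eqP hY) setUid eqxx !orbT.
    * by rewrite (eqP hX) (eqP hY) setUCr setCT cards0 orbT.
  + case/or4P: hY => hY.
    * by move/setUidPl: (small_sub hY hI') => ->; rewrite (eqP hX) eqxx !orbT.
    * by rewrite (cosmall_U _ hY) orbT.
    * by rewrite (eqP hX) (eqP hY) setUC setUCr setCT cards0 orbT.
    * by rewrite (eqP hX) (eqP hY) setUid eqxx !orbT.
Qed.

Lemma E1U_K0 A B : in_K0 r (E1 A :|: E1 B).
Proof.
apply/andP; split.
- by apply/forallP => X; apply/implyP => h; rewrite !inE h.
- apply/forallP => X; apply/implyP; rewrite !inE setCK.
  by case/orP; case/or4P=> [->|->|/eqP->|/eqP->]; rewrite ?setCK ?eqxx ?orbT.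
Qed.

Lemma E1_sub (E : {set {set V}}) A : in_K0 r E -> A \in E -> E1 A \subset E.
Proof.
case/andP=> /forallP h0 /forallP h1 hA; apply/subsetP => X; rewrite inE.
case/or4P => hX.
- exact: (implyP (h0 X)).
- by rewrite -(setCK X); apply: (implyP (h1 _)); apply: (implyP (h0 _)).
- by rewrite (eqP hX).
- by rewrite (eqP hX); apply: (implyP (h1 _)).
Qed.

Lemma K_K0 (E : {set {set V}}) : in_K r E -> in_K0 r E.
Proof. by case/and3P=> h0 h1 _; rewrite /in_K0 h0 h1. Qed.

Lemma cl0_cl (H : {set {set V}}) : cl0 r H \subset cl r H.
Proof.
apply/subsetP => X /cl0P h; apply/clP => E k s; exact: h (K_K0 k) s.
Qed.

Lemma cl_mono (H H' : {set {set V}}) : H \subset H' -> cl r H \subset cl r H'.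
Proof.
move=> s; apply/subsetP => X /clP h; apply/clP => E k s'.
exact: h k (subset_trans s s').
Qed.

End S.

Theorem mainTheorem15 (n r : nat) (H : {set {set 'I_n}}) (A B : {set 'I_n}) :
  A \in H -> B \in H ->
  (r_orthogonal r A B <-> cl r [set A; B] = cl r [set A] :|: cl r [set B]).
Proof.
move=> _ _.
have clAB_E : cl0 r [set A; B] \subset E1 r A :|: E1 r B.
  apply/subsetP => X /cl0P h; apply: h; first exact: E1U_K0.
  by apply/subsetP => Y; rewrite !inE => /orP[] /eqP ->; rewrite eqxx !orbT.
have E_cl0 : E1 r A :|: E1 r B \subset cl0 r [set A; B].
  apply/subsetP => X Xin; apply/cl0P => E k s.
  case/setUP: Xin => Xin.
  - by apply: (subsetP (E1_sub k (subsetP s A _))) => //; rewrite !inE eqxx.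
  - by apply: (subsetP (E1_sub k (subsetP s B _))) => //; rewrite !inE eqxx orbT.
have E1_cl C : E1 r C \subset cl r [set C].
  apply: subset_trans (cl0_cl _ _).
  apply/subsetP => X Xin; apply/cl0P => E k s.
  by apply: (subsetP (E1_sub k (subsetP s C _))) => //; rewrite !inE.
have cl_E1 C : cl r [set C] \subset E1 r C.
  apply/subsetP => X /clP h; apply: h; first exact: E1_K.
  by rewrite sub1set !inE eqxx !orbT.
have mA : cl r [set A] \subset cl r [set A; B].
  by apply: cl_mono; rewrite sub1set !inE eqxx.
have mB : cl r [set B] \subset cl r [set A; B].
  by apply: cl_mono; rewrite sub1set !inE eqxx orbT.
have UA : cl r [set A] = E1 r A by apply/eqP; rewrite eqEsubset cl_E1 E1_cl.
have UB : cl r [set B] = E1 r B by apply/eqP; rewrite eqEsubset cl_E1 E1_cl.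
rewrite /r_orthogonal UA UB; rewrite UA in mA; rewrite UB in mB; split => h.
- rewrite h in mA mB; apply/eqP; rewrite eqEsubset h clAB_E /=.
  by rewrite subUset mA mB.
- apply/eqP; rewrite eqEsubset cl0_cl andbT h; exact: E_cl0.
Qed.
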